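(* Let $p>1$ and let $s,q,V:\mathbb{R}^3\to(0,\infty)$ be radially symmetric $C^2$-functions. Suppose $U(x,t)=\psi(|x|,t)\frac{x}{|x|}$, with $\psi:[0,\infty)\times\mathbb{R}\to\mathbb{R}$, is a ($C^2$) solution of $$s(x)\partial_t^2U+\nabla\times\nabla\times U+q(x)U\pm V(x)|U|^{p-1}U=0\quad\text{on }\mathbb{R}^3\times\mathbb{R}.$$ Let $a:\mathbb{R}^3\to\mathbb{R}$ be a radially symmetric $C^2$-function. Then $U_a(x,t):=U(x,t+a(x))$ also solves the same equation (with the same sign).
   Context: A function $f:\mathbb{R}^3\to\mathbb{R}$ is radially symmetric if $f(x)$ depends only on $|x|$. *)

(* Defs.v *)
From Stdlib Require Import Reals.
From Coquelicot Require Import Coquelicot.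
Open Scope R_scope.

Definition pt := (R * R * R)%type.
Definition x1 (x : pt) : R := fst (fst x).
Definition x2 (x : pt) : R := snd (fst x).
Definition x3 (x : pt) : R := snd x.
Definition origin : pt := (0, 0, 0).
Definition pnorm (x : pt) : R := sqrt (x1 x ^ 2 + x2 x ^ 2 + x3 x ^ 2).
Definition scal_pt (c : R) (x : pt) : pt := (c * x1 x, c * x2 x, c * x3 x).

Definition radial (f : pt -> R) : Prop :=
  forall x y : pt, pnorm x = pnorm y -> f x = f y.

Definition sfield := pt -> R -> R.
Definition vfield := pt -> R -> pt.

(* variable i (0,1,2 = space coordinates x1,x2,x3 ; 3 = time t) *)
Definition line (i : nat) (f : sfield) (x : pt) (t : R) : R -> R :=
  match i with
  | 0%nat => fun y => f (y, x2 x, x3 x) t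
  | 1%nat => fun y => f (x1 x, y, x3 x) t
  | 2%nat => fun y => f (x1 x, x2 x, y) t
  | _ => fun y => f x y
  end.
Definition coord (i : nat) (x : pt) (t : R) : R :=
  match i with
  | 0%nat => x1 x | 1%nat => x2 x | 2%nat => x3 x | _ => t
  end.

Definition dd (i : nat) (f : sfield) : sfield :=
  fun x t => Derive (line i f x t) (coord i x t).

Definition joint (f : sfield) : pt * R -> R := fun z => f (fst z) (snd z).

Definition C2 (f : sfield) : Prop :=
  (forall z, continuous (joint f) z) /\
  forall i : nat, (i < 4)%nat ->
    (forall x t, ex_derive (line i f x t) (coord i x t)) /\
    (forall z, continuous (joint (dd i f)) z) /\
    forall j : nat, (j < 4)%nat ->
      (forall x t, ex_derive (line j (dd i f) x t) (coord j x t)) /\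
      (forall z, continuous (joint (dd j (dd i f))) z).

Definition C2sp (f : pt -> R) : Prop := C2 (fun x _ => f x).

Definition vcomp (k : nat) (U : vfield) : sfield :=
  fun x t => match k with
             | 0%nat => x1 (U x t) | 1%nat => x2 (U x t) | _ => x3 (U x t)
             end.

Definition curl (U : vfield) : vfield :=
  fun x t =>
    (dd 1 (vcomp 2 U) x t - dd 2 (vcomp 1 U) x t,
     dd 2 (vcomp 0 U) x t - dd 0 (vcomp 2 U) x t,
     dd 0 (vcomp 1 U) x t - dd 1 (vcomp 0 U) x t).

(* u^e for u >= 0, with the convention 0^e = 0 (e > 0 here) *)
Definition npow (u e : R) : R :=
  if Req_EM_T u 0 then 0 else Rpower u e.

Definition solves (s q V : pt -> R) (p eps : R) (U : vfield) : Prop :=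
  forall (x : pt) (t : R) (k : nat), (k < 3)%nat ->
    s x * dd 3 (dd 3 (vcomp k U)) x t
    + vcomp k (curl (curl U)) x t
    + q x * vcomp k U x t
    + eps * V x * npow (pnorm (U x t)) (p - 1) * vcomp k U x t = 0.

(* Main.v *)
Require Import Defs.
From Stdlib Require Import Reals Lra Lia Classical FunctionalExtensionality.
From Coquelicot Require Import Coquelicot.
From Coquelicot Require Import Derive_2d.
Open Scope R_scope.

Definition get (k:nat) (x:pt) : R := match k with 0%nat => x1 x | 1%nat => x2 x | _ => x3 x end.
Definition setc (k:nat) (x:pt) (y:R) : pt :=
  match k with 0%nat => (y, x2 x, x3 x) | 1%nat => (x1 x, y, x3 x) | _ => (x1 x, x2 x, y) end.
Definition sq (x:pt) := x1 x ^2 + x2 x ^2 + x3 x ^2.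

Lemma line_sp i f x t : (i < 3)%nat -> line i f x t = fun y => f (setc i x y) t.
Proof. intros H; destruct i as [|[|[|i]]]; try reflexivity; lia. Qed.
Lemma coord_sp i x t : (i < 3)%nat -> coord i x t = get i x.
Proof. intros H; destruct i as [|[|[|i]]]; try reflexivity; lia. Qed.
Lemma get_set_same i x y : get i (setc i x y) = y.
Proof. destruct i as [|[|i]]; reflexivity. Qed.
Lemma get_set_other i j x y : i <> j -> (i < 3)%nat -> (j < 3)%nat -> get j (setc i x y) = get j x.
Proof. intros H Hi Hj; destruct i as [|[|[|i]]]; destruct j as [|[|[|j]]]; try reflexivity; lia. Qed.
Lemma set_get i x : setc i x (get i x) = x.
Proof. destruct x as [[a b] c]; destruct i as [|[|i]]; reflexivity. Qed.
Lemma set_set i x y z : setc i (setc i x y) z = setc i x z.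
Proof. destruct i as [|[|i]]; reflexivity. Qed.
Lemma sq_set i x y : sq (setc i x y) = sq x - get i x ^2 + y^2.
Proof. destruct x as [[a b] c]; unfold sq; destruct i as [|[|i]]; simpl; unfold x1,x2,x3; simpl; nra. Qed.
Lemma pnorm_sq x : pnorm x = sqrt (sq x).
Proof. reflexivity. Qed.
Lemma get_origin k : get k origin = 0.
Proof. destruct k as [|[|k]]; reflexivity. Qed.
Lemma nz_of_get k x : get k x <> 0 -> x <> origin.
Proof. intros H E; subst; apply H, get_origin. Qed.
Lemma get_scal k c x : get k (scal_pt c x) = c * get k x.
Proof. destruct k as [|[|k]]; reflexivity. Qed.
Lemma set_origin0 j : setc j origin 0 = origin.
Proof. destruct j as [|[|j]]; reflexivity. Qed.

Lemma cont_pair {U V W : UniformSpace} (f : U -> V) (g : U -> W) x :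
  continuous f x -> continuous g x -> continuous (fun z => (f z, g z)) x.
Proof.
  intros Hf Hg.
  apply (continuous_comp_2 f g pair); auto.
  apply continuous_ext with (f := fun y => y).
  - intros [? ?]; reflexivity.
  - apply continuous_id.
Qed.

Lemma cont_fst {U V : UniformSpace} (z : U * V) : continuous fst z.
Proof. destruct z; apply continuous_fst. Qed.
Lemma cont_snd {U V : UniformSpace} (z : U * V) : continuous snd z.
Proof. destruct z; apply continuous_snd. Qed.

Lemma cont_setmap j x (u : R * R) :
  continuous (fun u : R * R => (setc j x (fst u), snd u) : pt * R) u.
Proof.
  apply cont_pair; [|apply cont_snd].
  destruct j as [|[|j]]; simpl;
  repeat (apply cont_pair); first [apply cont_fst | apply continuous_const].
Qed.

Definition Urep (psi : R -> R -> R) (U : vfield) :=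
  forall (x : pt) (t : R), x <> origin -> U x t = scal_pt (psi (pnorm x) t / pnorm x) x.

Lemma exl_C2 f i x t : C2 f -> (i < 4)%nat -> ex_derive (line i f x t) (coord i x t).
Proof. intros [_ H] Hi. apply (H i Hi). Qed.

Lemma exline f i x t : C2 f -> (i < 3)%nat -> ex_derive (fun y => f (setc i x y) t) (get i x).
Proof. intros H Hi. pose proof (exl_C2 f i x t H ltac:(lia)) as E. rewrite (line_sp i f x t Hi), (coord_sp i x t Hi) in E. exact E. Qed.

Lemma exline_any f i x t u : C2 f -> (i < 3)%nat -> ex_derive (fun y => f (setc i x y) t) u.
Proof. intros H Hi. pose proof (exline f i (setc i x u) t H Hi) as E.
  rewrite get_set_same in E. eapply ex_derive_ext; [|exact E]. intros; simpl. rewrite set_set; reflexivity. Qed.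

Lemma extime f x t : C2 f -> ex_derive (fun y => f x y) t.
Proof. intros H. apply (exl_C2 f 3 x t H); lia. Qed.

Lemma U_plane psi U k y t : Urep psi U -> (forall k, (k < 3)%nat -> C2 (vcomp k U)) ->
  (k < 3)%nat -> get k y = 0 -> get k (U y t) = 0.
Proof.
  intros HU HC Hk Hy.
  destruct (classic (y = origin)) as [->|Hne].
  2:{ rewrite HU by auto. rewrite get_scal, Hy. ring. }
  set (j := match k with 0%nat => 1%nat | _ => 0%nat end).
  assert (Hj : (j < 3)%nat) by (unfold j; destruct k; lia).
  assert (Hjk : j <> k) by (unfold j; destruct k; lia).
  set (g := fun u => get k (U (setc j origin u) t)).
  assert (Hg : ex_derive g 0).
  { pose proof (exline (vcomp k U) j origin t (HC k Hk) Hj) as E.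
    rewrite get_origin in E. exact E. }
  assert (Hz : forall u, u * g u = 0).
  { intros u. destruct (Req_dec u 0) as [->|Hu]; [ring|].
    unfold g. rewrite HU.
    - rewrite get_scal, get_set_other, get_origin by auto. ring.
    - apply (nz_of_get j). rewrite get_set_same; auto. }
  assert (D : Derive (fun u => u * g u) 0 = 0).
  { rewrite (Derive_ext _ (fun _ => 0)) by auto. apply Derive_const. }
  rewrite Derive_mult in D; auto using ex_derive_id.
  rewrite Derive_id in D. unfold g in D. rewrite set_origin0 in D. lra.
Qed.

Lemma rad_aux (f : pt -> R) j k x : radial f -> (j < 3)%nat -> (k < 3)%nat -> j <> k ->
  get k x <> 0 -> get j x ^ 2 <= get k x ^ 2 ->
  ex_derive (fun y => f (setc j x y)) (get j x) ->
  ex_derive (fun z => f (setc k x z)) (get k x) ->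
  get k x * Derive (fun y => f (setc j x y)) (get j x)
  = get j x * Derive (fun z => f (setc k x z)) (get k x).
Proof.
  intros Hr Hj Hk Hjk Hs Hle _ HG.
  set (s := get k x) in *. set (b := get j x) in *.
  set (w := fun y => s * sqrt (1 + (y ^ 2 - b ^ 2) / s ^ 2)).
  assert (Hs2 : 0 < s ^ 2) by (apply pow2_gt_0; auto).
  assert (Hpos : forall y, 0 <= 1 + (y ^ 2 - b ^ 2) / s ^ 2).
  { intros y. set (r := / s ^ 2).
    assert (Hr0 : 0 < r) by (apply Rinv_0_lt_compat; auto).
    assert (Hr1 : r * s ^ 2 = 1) by (unfold r; field; lra).
    unfold Rdiv; fold r. nra. }
  assert (Hw2 : forall y, w y ^ 2 = s ^ 2 + y ^ 2 - b ^ 2).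
  { intros y. unfold w. rewrite Rpow_mult_distr.
    rewrite <- Rsqr_pow2 with (x := sqrt _). rewrite Rsqr_sqrt by apply Hpos.
    field. lra. }
  assert (Hwb : w b = s).
  { unfold w. replace (1 + (b ^ 2 - b ^ 2) / s ^ 2) with 1 by (field; lra).
    rewrite sqrt_1; ring. }
  assert (Heq : forall y, f (setc j x y) = f (setc k x (w y))).
  { intros y. apply Hr. rewrite !pnorm_sq, !sq_set, Hw2. f_equal. fold s b. ring. }
  assert (Hdw : is_derive w b (b / s)).
  { unfold w. auto_derive.
    - replace (b * (b * 1) + - (b * (b * 1))) with 0 by ring. lra.
    - replace (1 + (b * (b * 1) + - (b * (b * 1))) * / (s * (s * 1))) with 1 by (field; lra).
      rewrite sqrt_1. field. lra. }
  rewrite (Derive_ext _ (fun y => f (setc k x (w y)))) by auto.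
  rewrite (Derive_comp (fun z => f (setc k x z)) w).
  - rewrite (is_derive_unique _ _ _ Hdw), Hwb. field. auto.
  - rewrite Hwb. auto.
  - eexists; eauto.
Qed.

Lemma rad_lem (f : pt -> R) j k x : radial f -> (j < 3)%nat -> (k < 3)%nat -> j <> k ->
  get k x <> 0 ->
  ex_derive (fun y => f (setc j x y)) (get j x) ->
  ex_derive (fun z => f (setc k x z)) (get k x) ->
  get k x * Derive (fun y => f (setc j x y)) (get j x)
  = get j x * Derive (fun z => f (setc k x z)) (get k x).
Proof.
  intros Hr Hj Hk Hjk Hs HF HG.
  destruct (Rle_lt_dec (get j x ^ 2) (get k x ^ 2)) as [Hle|Hlt].
  - apply rad_aux; auto.
  - symmetry. apply rad_aux; auto.
    + intros E. rewrite E in Hlt. assert (0 < get k x ^ 2) by (apply pow2_gt_0; auto). simpl in Hlt. lra.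
    + lra.
Qed.

Lemma sym_nz psi U j k x t : Urep psi U -> (forall k, (k < 3)%nat -> C2 (vcomp k U)) ->
  (j < 3)%nat -> (k < 3)%nat -> j <> k -> get k x <> 0 ->
  Derive (fun y => get k (U (setc j x y) t)) (get j x)
  = Derive (fun z => get j (U (setc k x z) t)) (get k x).
Proof.
  intros HU HC Hj Hk Hjk Hs.
  set (c := fun y : pt => psi (pnorm y) t / pnorm y).
  set (s := get k x) in *. set (b := get j x) in *.
  assert (E1 : forall y, get k (U (setc j x y) t) = s * c (setc j x y)).
  { intros y. rewrite HU.
    - rewrite get_scal, get_set_other by auto. unfold c. fold s. ring.
    - apply (nz_of_get k). rewrite get_set_other; auto. }
  assert (Hloc : locally s (fun z => z <> 0)).
  { assert (Ha : 0 < Rabs s) by (apply Rabs_pos_lt; auto).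
    exists (mkposreal _ Ha). intros z Hz E. subst z.
    change (Rabs (0 - s) < Rabs s) in Hz. rewrite Rminus_0_l, Rabs_Ropp in Hz. lra. }
  assert (E2 : forall z, z <> 0 -> get k (U (setc k x z) t) = z * c (setc k x z)).
  { intros z Hz. rewrite HU.
    - rewrite get_scal, get_set_same. unfold c. ring.
    - apply (nz_of_get k). rewrite get_set_same; auto. }
  assert (E3 : forall z, z <> 0 -> get j (U (setc k x z) t) = b * c (setc k x z)).
  { intros z Hz. rewrite HU.
    - rewrite get_scal, get_set_other by auto. unfold c. fold b. ring.
    - apply (nz_of_get k). rewrite get_set_same; auto. }
  assert (HFc : ex_derive (fun y => c (setc j x y)) b).
  { apply ex_derive_ext with (f := fun y => / s * get k (U (setc j x y) t)).
    - intros y. change (/ s * get k (U (setc j x y) t) = c (setc j x y)). rewrite E1. field. auto.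
    - apply ex_derive_scal. apply (exline (vcomp k U) j x t (HC k Hk) Hj). }
  assert (HGc : ex_derive (fun z => c (setc k x z)) s).
  { apply ex_derive_ext_loc with (f := fun z => / z * get k (U (setc k x z) t)).
    - eapply filter_imp; [|exact Hloc]. intros z Hz. change (/ z * get k (U (setc k x z) t) = c (setc k x z)). rewrite E2 by auto. field. auto.
    - apply ex_derive_mult.
      + apply ex_derive_inv; auto. apply ex_derive_id.
      + apply (exline (vcomp k U) k x t (HC k Hk) Hk). }
  rewrite (Derive_ext _ (fun y => s * c (setc j x y))) by auto.
  rewrite (Derive_ext_loc (fun z => get j (U (setc k x z) t)) (fun z => b * c (setc k x z))).
  2:{ eapply filter_imp; [|exact Hloc]. intros z Hz. simpl. apply E3; auto. }
  rewrite !Derive_scal.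
  apply (rad_lem c j k x); auto.
  intros y1 y2 E. unfold c. rewrite E. reflexivity.
Qed.

Lemma curlU_sym psi U j k x t : Urep psi U -> (forall k, (k < 3)%nat -> C2 (vcomp k U)) ->
  (j < 3)%nat -> (k < 3)%nat -> j <> k ->
  dd j (vcomp k U) x t = dd k (vcomp j U) x t.
Proof.
  intros HU HC Hj Hk Hjk. unfold dd.
  rewrite (line_sp j), (line_sp k), (coord_sp j), (coord_sp k) by auto.
  change (Derive (fun y => get k (U (setc j x y) t)) (get j x)
    = Derive (fun z => get j (U (setc k x z) t)) (get k x)).
  destruct (Req_dec (get k x) 0) as [Hk0|Hk0].
  - destruct (Req_dec (get j x) 0) as [Hj0|Hj0].
    + rewrite (Derive_ext _ (fun _ => 0)), (Derive_ext (fun z => get j _) (fun _ => 0)).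
      * rewrite !Derive_const; reflexivity.
      * intros z. apply (U_plane psi); auto. rewrite get_set_other; auto.
      * intros y. apply (U_plane psi); auto. rewrite get_set_other; auto.
    + symmetry. apply (sym_nz psi); auto.
  - apply (sym_nz psi); auto.
Qed.

Lemma chain_Ua (U : vfield) (a : pt -> R) j k x t : (j < 3)%nat -> (k < 3)%nat ->
  C2 (vcomp k U) -> C2sp a ->
  dd j (vcomp k (fun x t => U x (t + a x))) x t
  = dd j (vcomp k U) x (t + a x) + dd 3 (vcomp k U) x (t + a x) * Derive (fun y => a (setc j x y)) (get j x).
Proof.
  intros Hj Hk HC Ha. unfold dd.
  rewrite !(line_sp j), !(coord_sp j) by auto.
  set (f := fun u v => get k (U (setc j x u) v)).
  set (b := get j x).
  assert (Hxb : setc j x b = x) by apply set_get.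
  change (Derive (fun y => f y (t + a (setc j x y))) b
    = Derive (fun y => f y (t + a x)) b + Derive (fun y => get k (U x y)) (t + a x) * Derive (fun y => a (setc j x y)) b).
  replace (Derive (fun y => get k (U x y)) (t + a x)) with (Derive (fun y => f b y) (t + a x))
    by (unfold f; rewrite Hxb; reflexivity).
  set (T := t + a x).
  assert (Hex1 : forall u v, ex_derive (fun z => f z v) u).
  { intros u v. apply (exline_any (vcomp k U) j x v u HC Hj). }
  assert (Hdiff : differentiable_pt_lim f b T (Derive (fun z => f z T) b) (Derive (fun z => f b z) T)).
  { apply filterdiff_differentiable_pt_lim.
    eapply filterdiff_ext_lin.
    - apply (is_derive_filterdiff f b T (fun u v => Derive (fun z => f z v) u)).
      + apply filter_forall. intros [u v]. simpl. apply Derive_correct. apply Hex1.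
      + apply Derive_correct. unfold f. rewrite Hxb. apply (extime (vcomp k U)); auto.
      + apply continuous_ext with
          (f := fun u : R * R => joint (dd j (vcomp k U)) (setc j x (fst u), snd u)).
        * intros [u v]. change (dd j (vcomp k U) (setc j x u) v = Derive (fun z => f z v) u). unfold dd. rewrite (line_sp j), (coord_sp j), get_set_same by auto.
          apply Derive_ext. intros z. unfold f. rewrite set_set. reflexivity.
        * apply continuous_comp with (f := fun u : R * R => (setc j x (fst u), snd u) : pt * R).
          -- apply cont_setmap.
          -- change (continuous (joint (dd j (vcomp k U))) (setc j x b, T)).
             destruct HC as [_ HC]. destruct (HC j ltac:(lia)) as [_ [HH _]]. apply HH.
    - intros [u v]. reflexivity. }
  assert (Ha1 : ex_derive (fun y => a (setc j x y)) b).
  { apply (exline (fun x _ => a x) j x 0 Ha Hj). }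
  apply is_derive_unique. apply is_derive_Reals.
  assert (Hq : derivable_pt_lim (fun y => t + a (setc j x y)) b (Derive (fun y => a (setc j x y)) b)).
  { replace (Derive (fun y => a (setc j x y)) b) with (0 + Derive (fun y => a (setc j x y)) b) by ring.
    apply (derivable_pt_lim_plus (fun _ => t) (fun y => a (setc j x y))).
    - apply derivable_pt_lim_const.
    - apply is_derive_Reals. apply Derive_correct; auto. }
  pose proof (derivable_pt_lim_comp_2d f (fun y => y) (fun y => t + a (setc j x y)) b _ _ 1 _
     ltac:(cbv beta; rewrite Hxb; exact Hdiff) (derivable_pt_lim_id b) Hq) as R.
  simpl in R. replace (Derive (fun z => f z T) b + Derive (fun z => f b z) T * Derive (fun y => a (setc j x y)) b)
    with (Derive (fun z => f z T) b * 1 + Derive (fun z => f b z) T * Derive (fun y => a (setc j x y)) b) by ring.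
  exact R.
Qed.

Lemma curlUa_sym psi U a j k x t : Urep psi U -> (forall k, (k < 3)%nat -> C2 (vcomp k U)) ->
  radial a -> C2sp a -> (j < 3)%nat -> (k < 3)%nat -> j <> k ->
  dd j (vcomp k (fun x t => U x (t + a x))) x t = dd k (vcomp j (fun x t => U x (t + a x))) x t.
Proof.
  intros HU HC Hr Ha Hj Hk Hjk.
  rewrite !chain_Ua by auto.
  rewrite (curlU_sym psi U j k) by auto.
  set (T := t + a x).
  set (Ja := Derive (fun y => a (setc j x y)) (get j x)).
  set (Ka := Derive (fun y => a (setc k x y)) (get k x)).
  set (Tk := dd 3 (vcomp k U) x T). set (Tj := dd 3 (vcomp j U) x T).
  assert (HTC : get j x * Tk = get k x * Tj).
  { unfold Tk, Tj, dd. simpl line. simpl coord. rewrite <- !Derive_scal.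
    apply Derive_ext. intros v.
    destruct (classic (x = origin)) as [->|Hne].
    - rewrite !get_origin. ring.
    - change (get j x * get k (U x v) = get k x * get j (U x v)).
      rewrite HU by auto. rewrite !get_scal. ring. }
  assert (exa : forall i, (i < 3)%nat -> ex_derive (fun y => a (setc i x y)) (get i x)).
  { intros i Hi. apply (exline (fun x _ => a x) i x 0 Ha Hi). }
  cut (Tk * Ja = Tj * Ka). { intros E. rewrite E. reflexivity. }
  destruct (Req_dec (get k x) 0) as [Hk0|Hk0].
  - destruct (Req_dec (get j x) 0) as [Hj0|Hj0].
    + assert (Z : forall i, (i < 3)%nat -> get i x = 0 -> dd 3 (vcomp i U) x T = 0).
      { intros i Hi Hi0. unfold dd. simpl line. simpl coord.
        rewrite (Derive_ext _ (fun _ => 0)). apply Derive_const.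
        intros v. apply (U_plane psi); auto. }
      unfold Tk, Tj. rewrite !Z by auto. ring.
    + pose proof (rad_lem a k j x Hr Hk Hj (not_eq_sym Hjk) Hj0 (exa k Hk) (exa j Hj)) as B.
      fold Ja Ka in B.
      apply (Rmult_eq_reg_l (get j x)); auto.
      replace (get j x * (Tj * Ka)) with (Tj * (get j x * Ka)) by ring. rewrite B.
      replace (get j x * (Tk * Ja)) with ((get j x * Tk) * Ja) by ring. rewrite HTC. ring.
  - pose proof (rad_lem a j k x Hr Hj Hk Hjk Hk0 (exa j Hj) (exa k Hk)) as B.
    fold Ja Ka in B.
    apply (Rmult_eq_reg_l (get k x)); auto.
    replace (get k x * (Tk * Ja)) with (Tk * (get k x * Ja)) by ring. rewrite B.
    replace (get k x * (Tj * Ka)) with ((get k x * Tj) * Ka) by ring. rewrite <- HTC. ring.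
Qed.

Lemma curlcurl0 (W : vfield) : (forall x t, curl W x t = (0, 0, 0)) ->
  forall k x t, vcomp k (curl (curl W)) x t = 0.
Proof.
  intros H k x t.
  assert (E : forall m, vcomp m (curl W) = fun _ _ => 0).
  { intros m. apply functional_extensionality; intros y. apply functional_extensionality; intros s.
    unfold vcomp. rewrite H. destruct m as [|[|m]]; reflexivity. }
  unfold curl at 1. rewrite !E.
  assert (D : forall i y s, dd i (fun _ _ => 0) y s = 0).
  { intros i y s. unfold dd. destruct i as [|[|[|i]]]; simpl; apply Derive_const. }
  unfold vcomp; cbv beta; destruct k as [|[|k]]; unfold x1, x2, x3; cbn [fst snd]; rewrite !D; ring.
Qed.

Lemma shiftD (g : R -> R) c t0 : ex_derive g (t0 + c) ->
  Derive (fun y => g (y + c)) t0 = Derive g (t0 + c).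
Proof.
  intros H.
  assert (Hd : is_derive (fun y => y + c) t0 1) by (auto_derive; auto; ring).
  rewrite (Derive_comp g (fun y => y + c)).
  - replace (Derive (fun y => y + c) t0) with 1 by (symmetry; apply is_derive_unique; exact Hd). ring.
  - exact H.
  - eexists; exact Hd.
Qed.

Lemma time_Ua (U : vfield) a k x t : C2 (vcomp k U) ->
  dd 3 (dd 3 (vcomp k (fun x t => U x (t + a x)))) x t = dd 3 (dd 3 (vcomp k U)) x (t + a x).
Proof.
  intros HC.
  assert (E : dd 3 (vcomp k (fun x t => U x (t + a x))) = fun x' t' => dd 3 (vcomp k U) x' (t' + a x')).
  { apply functional_extensionality; intros x'. apply functional_extensionality; intros t'.
    unfold dd. simpl line. simpl coord.
    apply (shiftD (fun y => vcomp k U x' y)). apply (extime (vcomp k U)); auto. }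
  rewrite E. unfold dd at 1. simpl line. simpl coord.
  apply (shiftD (fun y => dd 3 (vcomp k U) x y)).
  destruct HC as [_ HC]. destruct (HC 3%nat ltac:(lia)) as [_ [_ H3]].
  destruct (H3 3%nat ltac:(lia)) as [H4 _]. apply (H4 x (t + a x)).
Qed.

Theorem lemma2p3 :
  forall (p eps : R) (s q V a : pt -> R) (psi : R -> R -> R) (U : vfield),
    1 < p ->
    (eps = 1 \/ eps = -1) ->
    radial s -> radial q -> radial V ->
    C2sp s -> C2sp q -> C2sp V ->
    (forall x, 0 < s x) -> (forall x, 0 < q x) -> (forall x, 0 < V x) ->
    (forall k : nat, (k < 3)%nat -> C2 (vcomp k U)) ->
    (forall (x : pt) (t : R), x <> origin ->
        U x t = scal_pt (psi (pnorm x) t / pnorm x) x) ->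
    solves s q V p eps U ->
    radial a -> C2sp a ->
    solves s q V p eps (fun x t => U x (t + a x)).
Proof.
  intros p eps s q V a psi U Hp Heps Hrs Hrq HrV Cs Cq CV Hs Hq HV HC HU Hsol Hra Ca.
  assert (HU' : Urep psi U) by exact HU.
  assert (cU : forall x t, curl U x t = (0, 0, 0)).
  { intros x t. unfold curl.
    rewrite (curlU_sym psi U 1 2), (curlU_sym psi U 2 0), (curlU_sym psi U 0 1) by (auto; lia).
    rewrite !Rminus_diag. reflexivity. }
  assert (cUa : forall x t, curl (fun x t => U x (t + a x)) x t = (0, 0, 0)).
  { intros x t. unfold curl.
    rewrite (curlUa_sym psi U a 1 2), (curlUa_sym psi U a 2 0), (curlUa_sym psi U a 0 1) by (auto; lia).
    rewrite !Rminus_diag. reflexivity. }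
  unfold solves. intros x t k Hk.
  pose proof (Hsol x (t + a x) k Hk) as S.
  rewrite (curlcurl0 U cU) in S.
  rewrite (curlcurl0 _ cUa).
  rewrite time_Ua by auto.
  exact S.
Qed.
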